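(* Let $n\ge 27$, $\mathcal{X},\mathcal{Y}$ finite with $|\mathcal{X}|,|\mathcal{Y}|\ge 2$, $\mathbf{X}$ a random vector on $\mathcal{X}^n$ and $\mathbf{Y}$ with $\mathbf{Y}|\mathbf{X}\sim p^n_{Y|X}$. Let $\lambda>0$ and $t\in\mathbb{N}_+$ with $\lambda t>n\log_2|\mathcal{Y}|$, and for $s\in[0:t]$ let $\mathcal{S}_{\mathbf{Y}}(s)=\{\mathbf{y}:p_{\mathbf{Y}}(\mathbf{y})>0,\ \lfloor\min(h_{\mathbf{Y}}(\mathbf{y})/\lambda,t)\rfloor=s\}$ and $\eta_s=p_{\mathbf{Y}}\left(\bigcup_{i=0}^s\mathcal{S}_{\mathbf{Y}}(i)\right)$. Then for each $s\in[0:t]$, $\bigcup_{i=0}^s\mathcal{S}_{\mathbf{Y}}(i)$ is the unique minimum $\eta_s$-quasi image of $\mathbf{X}$ by $p_{Y|X}$, and $$\log_2\bar g^n_{Y|X}(\mathbf{X},\eta_s)<s\lambda+\lambda+\log_2(t+1),\qquad \log_2\bar g^n_{Y|X}(\mathbf{X},\eta_s)\ge s\lambda+\log_2 p_{\mathbf{Y}}(\mathcal{S}_{\mathbf{Y}}(s)).$$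
   Context: $h_{\mathbf{Y}}(\mathbf{y})=-\log_2 p_{\mathbf{Y}}(\mathbf{y})$. For $\eta\in(0,1]$, a set $\mathcal{B}\subseteq\mathcal{Y}^n$ is an $\eta$-quasi image of $\mathbf{X}$ by $p_{Y|X}$ if $\sum_{\mathbf{x}}p^n_{Y|X}(\mathcal{B}|\mathbf{x})p_{\mathbf{X}}(\mathbf{x})\ge\eta$; $\bar g^n_{Y|X}(\mathbf{X},\eta)$ is the minimum cardinality of such a set, and a minimum $\eta$-quasi image is one achieving it. *)

(* Defs.v *)
From mathcomp Require Import all_boot all_order all_algebra.
From mathcomp Require Import reals exp.
Set Implicit Arguments. Unset Strict Implicit. Unset Printing Implicit Defensive.
Import Order.TTheory GRing.Theory Num.Theory.
Local Open Scope ring_scope.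

Section Defs.
Variables (R : realType) (X Y : finType) (n : nat).
Variables (pX : {ffun n.-tuple X -> R}) (W : X -> Y -> R).

(* base-2 logarithm (note: mathcomp's ln 0 = 0) *)
Definition log2 (a : R) : R := ln a / ln 2.

Definition Wn (x : n.-tuple X) (y : n.-tuple Y) : R :=
  \prod_(i < n) W (tnth x i) (tnth y i).

Definition WnB (x : n.-tuple X) (B : {set n.-tuple Y}) : R :=
  \sum_(y in B) Wn x y.

Definition pY (y : n.-tuple Y) : R := \sum_x pX x * Wn x y.

Definition PY (B : {set n.-tuple Y}) : R := \sum_(y in B) pY y.

Definition hY (y : n.-tuple Y) : R := - log2 (pY y).

Definition quasi_image (eta : R) (B : {set n.-tuple Y}) : bool :=
  eta <= \sum_x WnB x B * pX x.

(* minimum cardinality of an eta-quasi image (default value, never a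
   cardinality, when no quasi image exists) *)
Definition gbar (eta : R) : nat :=
  \big[minn/#|[set: n.-tuple Y]|.+1]_(B : {set n.-tuple Y} | quasi_image eta B) #|B|.

Definition min_quasi_image (eta : R) (B : {set n.-tuple Y}) : Prop :=
  quasi_image eta B /\ #|B| = gbar eta.

Definition SY (lam : R) (t s : nat) : {set n.-tuple Y} :=
  [set y | (0 < pY y) && (Num.floor (Num.min (hY y / lam) t%:R) == s%:Z)].

Definition SYcup (lam : R) (t s : nat) : {set n.-tuple Y} :=
  \bigcup_(i < s.+1) SY lam t i.

End Defs.

(* Main.v *)
Require Import Defs.
From mathcomp Require Import all_boot all_order all_algebra.
From mathcomp Require Import reals exp sequences.
From mathcomp Require Import zify ring lra.
Import Order.TTheory GRing.Theory Num.Theory.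
Local Open Scope ring_scope.
Set Implicit Arguments. Unset Strict Implicit. Unset Printing Implicit Defensive.

Section Aux.
Variables (R : realType) (X Y : finType) (n : nat).
Variables (pX : {ffun n.-tuple X -> R}) (W : X -> Y -> R).
Hypothesis pX0 : forall x, 0 <= pX x.
Hypothesis pX1 : \sum_x pX x = 1.
Hypothesis W0 : forall a b, 0 <= W a b.
Hypothesis W1 : forall a, \sum_b W a b = 1.

Local Notation pY := (pY pX W).
Local Notation PY := (PY pX W).

Lemma sumWn (x : n.-tuple X) : \sum_y Wn W x y = 1.
Proof.
have -> : 1 = \prod_(i < n) \sum_b W (tnth x i) b.
  by rewrite big1 // => i _; rewrite W1.
rewrite bigA_distr_bigA /=.
rewrite (reindex (fun y : n.-tuple Y => [ffun i => tnth y i])) /=.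
  by apply: eq_bigr => y _; rewrite /Wn; apply: eq_bigr => i _; rewrite ffunE.
exists (fun f : {ffun 'I_n -> Y} => [tuple f i | i < n]) => [y _|f _].
  by apply: eq_from_tnth => i; rewrite tnth_mktuple ffunE.
by apply/ffunP => i; rewrite !ffunE tnth_mktuple.
Qed.

Lemma Wn_ge0 (x : n.-tuple X) (y : n.-tuple Y) : 0 <= Wn W x y.
Proof. by apply: prodr_ge0 => i _; apply: W0. Qed.

Lemma pY_ge0 y : 0 <= pY y.
Proof. by apply: sumr_ge0 => x _; apply: mulr_ge0 => //; apply: Wn_ge0. Qed.

Lemma sum_pY : \sum_y pY y = 1.
Proof.
rewrite /Defs.pY exchange_big /= -pX1; apply: eq_bigr => x _.
by rewrite -mulr_sumr sumWn mulr1.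
Qed.

Lemma PY_le1 B : PY B <= 1.
Proof.
rewrite -sum_pY /Defs.PY [X in _ <= X](bigID (mem B)) /= lerDl.
by apply: sumr_ge0 => y _; apply: pY_ge0.
Qed.

Lemma PY_ge0 B : 0 <= PY B.
Proof. by apply: sumr_ge0 => y _; apply: pY_ge0. Qed.

Lemma pY_le1 y : pY y <= 1.
Proof.
have := PY_le1 [set y]; by rewrite /Defs.PY big_set1.
Qed.

Lemma qiE eta B : quasi_image pX W eta B = (eta <= PY B).
Proof.
rewrite /quasi_image /Defs.PY /WnB; congr (_ <= _).
under eq_bigr do rewrite mulr_suml.
rewrite exchange_big /=; apply: eq_bigr => y _; apply: eq_bigr => x _.
by rewrite mulrC.
Qed.

Lemma exchange (A B : {set n.-tuple Y}) c : 0 <= c ->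
  (forall y, y \in A -> c < pY y) -> (forall z, z \notin A -> pY z <= c) ->
  PY A <= PY B -> (#|B| <= #|A|)%N -> B = A.
Proof.
move=> c0 hA hB hP hc.
suff sAB : A \subset B.
  by apply/esym/eqP; rewrite -(subset_leqif_cards sAB) eqn_leq hc (subset_leq_card sAB).
apply/negPn/negP => /subsetPn [a aA aB].
have : PY B < PY A; last by rewrite ltNge hP.
rewrite /Defs.PY (big_setID (A:=B) A) /= (big_setID (A:=A) B) /= setIC ltrD2l.
have h1 : \sum_(y in B :\: A) pY y <= \sum_(y in B :\: A) c.
  by apply: ler_sum => y; rewrite inE => /andP [/hB].
have h3 : \sum_(y in A :\: B) c < \sum_(y in A :\: B) pY y.
  apply: ltr_sum; last by move=> y; rewrite inE => /andP [_ /hA].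
  by apply/hasP; exists a; rewrite ?mem_index_enum // inE aA aB.
have h2 : c *+ #|B :\: A| <= c *+ #|A :\: B|.
  rewrite -(mulr_natr c #|B :\: A|) -(mulr_natr c #|A :\: B|); apply: ler_wpM2l => //; rewrite ler_nat.
  by move: hc; rewrite -(cardsID A B) -(cardsID B A) [B :&: A]setIC leq_add2l.
rewrite !sumr_const in h1 h3.
exact: (le_lt_trans h1 (le_lt_trans h2 h3)).
Qed.

Lemma bigmin_le (T : finType) (P : pred T) (F : T -> nat) x j :
  P j -> (\big[minn/x]_(i | P i) F i <= F j)%N.
Proof.
move=> Pj; have : j \in index_enum T := mem_index_enum j.
elim: (index_enum T) => [|a r IH]; first by rewrite in_nil.
rewrite big_cons in_cons => /orP [/eqP eja|/IH h].
  by rewrite -eja Pj geq_minl.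
by case: (P a) => //; exact: leq_trans (geq_minr _ _) h.
Qed.

Lemma gbarE (A : {set n.-tuple Y}) c : 0 <= c ->
  (forall y, y \in A -> c < pY y) -> (forall z, z \notin A -> pY z <= c) ->
  gbar pX W (PY A) = #|A|.
Proof.
move=> c0 hA hB; apply/eqP; rewrite eqn_leq; apply/andP; split.
  by rewrite /gbar; apply: bigmin_le; rewrite qiE.
rewrite /gbar; apply: (big_ind (fun m => #|A| <= m)%N).
- by apply: leqW; apply: subset_leq_card; apply: subsetT.
- by move=> a b ha hb; rewrite leq_min ha hb.
move=> B; rewrite qiE => hP.
rewrite leqNgt; apply/negP => lt.
have eBA := @exchange A B c c0 hA hB hP (ltnW lt).
by move: lt; rewrite eBA ltnn.
Qed.

Lemma thr (A : {set n.-tuple Y}) :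
  (forall y, y \in A -> 0 < pY y) ->
  (forall y z, y \in A -> z \notin A -> pY z < pY y) ->
  exists c, [/\ 0 <= c, (forall y, y \in A -> c < pY y) & (forall z, z \notin A -> pY z <= c)].
Proof.
move=> hpos hpw.
exists (\big[Order.max/0]_(z | z \notin A) pY z); split.
- exact: bigmax_ge_id.
- move=> y yA; apply: bigmax_lt; first exact: hpos.
  by move=> z zA; apply: hpw.
- by move=> z zA; apply: le_bigmax_cond.
Qed.

End Aux.

Section Main.
Variables (R : realType) (X Y : finType) (n : nat).
Variables (pX : {ffun n.-tuple X -> R}) (W : X -> Y -> R) (lam : R) (t : nat).
Hypothesis pX0 : forall x, 0 <= pX x.
Hypothesis pX1 : \sum_x pX x = 1.
Hypothesis W0 : forall a b, 0 <= W a b.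
Hypothesis W1 : forall a, \sum_b W a b = 1.
Hypothesis lam0 : 0 < lam.

Local Notation pY := (pY pX W).
Local Notation PY := (PY pX W).
Local Notation m y := (Num.min (hY pX W y / lam) t%:R).

Lemma ln2_gt0 : 0 < ln (2 : R).
Proof. by rewrite ln_gt0 // ltr1n. Qed.

Lemma hY_lt (y : n.-tuple Y) a : (hY pX W y < a) = (- (a * ln 2) < ln (pY y)).
Proof.
by rewrite /hY /log2 -mulNr ltr_pdivrMr ?ln2_gt0 // [in RHS]ltrNl.
Qed.

Lemma hY_ge (y : n.-tuple Y) a : (a <= hY pX W y) = (ln (pY y) <= - (a * ln 2)).
Proof.
by rewrite /hY /log2 -mulNr ler_pdivlMr ?ln2_gt0 // [in RHS]lerNr.
Qed.

Lemma lt_lnE (x b : R) : 0 < x -> (b < ln x) = (expR b < x).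
Proof. by move=> x0; rewrite -{2}(lnK (x:=x)) ?ltr_expR // posrE. Qed.

Lemma le_lnE (x b : R) : 0 < x -> (ln x <= b) = (x <= expR b).
Proof. by move=> x0; rewrite -{2}(lnK (x:=x)) ?ler_expR // posrE. Qed.

Lemma hY_ge0 y : 0 < pY y -> 0 <= hY pX W y.
Proof.
move=> py; rewrite hY_ge mul0r oppr0 ln_le0 //.
exact: pY_le1.
Qed.

Lemma m_ge0 y : 0 < pY y -> 0 <= m y.
Proof.
move=> py; rewrite le_min ler0n andbT.
by apply: divr_ge0; [exact: hY_ge0 | exact: ltW].
Qed.

Lemma memA s y : (y \in SYcup pX W lam t s) = (0 < pY y) && (m y < s.+1%:R).
Proof.
apply/bigcupP/andP.
- case=> i _; rewrite inE => /andP [py /eqP fl]; split => //.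
  have : (Num.floor (m y) < s.+1%:Z)%R by rewrite fl ltz_nat ltn_ord.
  by rewrite floor_lt_int.
- case=> py lt.
  have f0 : (0 <= Num.floor (m y))%R by rewrite floor_ge0 m_ge0.
  have [k hk] : exists k : nat, Num.floor (m y) = k%:Z.
    by exists `|Num.floor (m y)|%N; rewrite gez0_abs.
  have ks : (k < s.+1)%N by rewrite -ltz_nat -hk floor_lt_int.
  by exists (Ordinal ks) => //; rewrite inE py /= hk.
Qed.

Lemma m_anti y z : 0 < pY y -> pY y <= pY z -> m z <= m y.
Proof.
move=> py le.
have hz : hY pX W z / lam <= hY pX W y / lam.
  rewrite ler_pM2r ?invr_gt0 // /hY /log2 lerN2 ler_pM2r ?invr_gt0 ?ln2_gt0 //.
  by rewrite ler_ln // posrE // (lt_le_trans py le).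
by rewrite le_min !ge_min lexx orbT andbT hz.
Qed.

Lemma pw s y z : y \in SYcup pX W lam t s -> z \notin SYcup pX W lam t s ->
  pY z < pY y.
Proof.
rewrite !memA => /andP [py my] zA; rewrite ltNge; apply/negP => le.
have mz : m z <= m y by apply: m_anti => //.
by rewrite (lt_le_trans py le) (le_lt_trans mz my) in zA.
Qed.

Lemma posA s y : y \in SYcup pX W lam t s -> 0 < pY y.
Proof. by rewrite memA => /andP []. Qed.

End Main.

Unset Implicit Arguments.

Theorem lemma24 (R : realType) (X Y : finType) (n : nat)
  (pX : {ffun n.-tuple X -> R}) (W : X -> Y -> R) (lam : R) (t : nat) :
  (27 <= n)%N -> (2 <= #|X|)%N -> (2 <= #|Y|)%N ->
  (forall x, 0 <= pX x) -> \sum_x pX x = 1 ->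
  (forall a b, 0 <= W a b) -> (forall a, \sum_b W a b = 1) ->
  0 < lam -> (0 < t)%N -> n%:R * log2 (#|Y|%:R : R) < lam * t%:R ->
  forall s : nat, (s <= t)%N ->
    let A := SYcup pX W lam t s in
    let eta := PY pX W A in
    min_quasi_image pX W eta A /\
    (forall B, min_quasi_image pX W eta B -> B = A) /\
    log2 (gbar pX W eta)%:R < s%:R * lam + lam + log2 (t.+1)%:R /\
    (0 < PY pX W (SY pX W lam t s) ->
       s%:R * lam + log2 (PY pX W (SY pX W lam t s)) <= log2 (gbar pX W eta)%:R).
Proof.
move=> _ _ hY2 pX0 pX1 W0 W1 lam0 t0 hlt s st A eta.
have hpos : forall y, y \in A -> 0 < pY pX W y.
  by move=> y yA; exact: (posA pX0 pX1 W0 W1 lam0 yA).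
have hpw : forall y z, y \in A -> z \notin A -> pY pX W z < pY pX W y.
  by move=> y z yA zA; exact: (pw pX0 pX1 W0 W1 lam0 yA zA).
have [c [c0 hcA hcB]] := thr hpos hpw.
have gE : gbar pX W eta = #|A| := gbarE c0 hcA hcB.
have l2 : 0 < ln (2 : R) := ln2_gt0 R.
split; [|split; [|split]].
- by split; [rewrite qiE | rewrite gE].
- move=> B [qB cB]; apply: (exchange c0 hcA hcB); first by rewrite -qiE.
  by rewrite cB gE.
- rewrite gE.
  have lt1 : 0 < log2 (t.+1%:R : R) by rewrite /log2 divr_gt0 // ln_gt0 // ltr1n.
  have sl0 : 0 <= s%:R * lam by rewrite mulr_ge0 // ltW.
  have [A0|Apos] := eqVneq #|A| 0%N.
    have L0 : ln ((0%N)%:R : R) = 0 by rewrite ln0.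
    rewrite A0 {1}/log2 L0 mul0r; lra.
  have Ap : (0 < #|A|%:R :> R) by rewrite ltr0n lt0n.
  case: (ltnP s t) => [slt|ts].
  + set K := s.+1%:R * lam * ln 2.
    have hE : forall y, y \in A -> expR (- K) < pY pX W y.
      move=> y yA; have := yA; rewrite memA // => /andP [py my].
      rewrite -lt_lnE // /K -hY_lt.
      move: my; rewrite gt_min => /orP [h|h].
        by rewrite -ltr_pdivrMr.
      by move: h; rewrite ltr_nat ltnS leqNgt slt.
    have hsum : #|A|%:R * expR (- K) <= 1.
      apply: le_trans (PY_le1 pX0 pX1 W0 W1 A).
      rewrite mulrC mulr_natr -sumr_const /Defs.PY; apply: ler_sum => y yA.
      exact: ltW (hE y yA).
    have : ln (#|A|%:R * expR (- K)) <= 0 by rewrite ln_le0.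
    rewrite lnM ?posrE ?expR_gt0 // expRK => hl.
    have : log2 #|A|%:R <= s.+1%:R * lam.
      rewrite /log2 ler_pdivrMr //; move: hl; rewrite /K; lra.
    rewrite -addn1 natrD mulrDl mul1r; lra.
  + have sts : s = t by apply/eqP; rewrite eqn_leq st ts.
    subst s.
    have cardA : (#|A| <= #|Y| ^ n)%N.
      by rewrite -card_tuple -cardsT subset_leq_card // subsetT.
    have Y0 : (0 < #|Y|)%N by apply: leq_trans hY2.
    have : log2 #|A|%:R <= n%:R * log2 (#|Y|%:R : R).
      rewrite /log2 mulrA ler_pM2r ?invr_gt0 // mulr_natl -lnXn ?ltr0n //.
      rewrite ler_ln ?posrE ?exprn_gt0 ?ltr0n ?lt0n ?Y0 ?(negbT (lt0n_neq0 Y0)) //; last by rewrite -lt0n.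
      apply: (@le_trans _ _ ((#|Y| ^ n)%:R)); first by rewrite ler_nat.
      by rewrite natrX.
    rewrite [t%:R * lam]mulrC; lra.
- move=> PS0; rewrite gE.
  set S := SY pX W lam t s.
  set K := s%:R * lam * ln 2.
  have hE : forall y, y \in S -> pY pX W y <= expR (- K).
    move=> y; rewrite inE => /andP [py /eqP fl].
    rewrite -le_lnE // /K -hY_ge.
    have : (s%:Z <= Num.floor (Num.min (hY pX W y / lam) t%:R))%R by rewrite fl.
    rewrite floor_ge_int le_min => /andP [h _].
    by move: h; rewrite ler_pdivlMr.
  have SA : S \subset A.
    by apply/subsetP => y yS; apply/bigcupP; exists ord_max.
  have hPS : PY pX W S <= #|A|%:R * expR (- K).
    apply: (@le_trans _ _ (#|S|%:R * expR (- K))).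
      rewrite mulrC mulr_natr -sumr_const; apply: ler_sum => y; exact: hE.
    by apply: ler_wpM2r; [exact: expR_ge0 | rewrite ler_nat; exact: subset_leq_card].
  have Ap : 0 < #|A|%:R :> R.
    have := lt_le_trans PS0 hPS; by rewrite pmulr_lgt0 ?expR_gt0.
  have := hPS; rewrite -ler_ln ?posrE ?mulr_gt0 ?expR_gt0 //.
  rewrite lnM ?posrE ?expR_gt0 // expRK => hl.
  have : ln (PY pX W S) / ln 2 <= (ln #|A|%:R + - K) / ln 2.
    by rewrite ler_pM2r ?invr_gt0.
  rewrite mulrDl mulNr /K mulfK ?gt_eqF //; rewrite /log2; lra.
Qed.
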